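(* For all $N\subseteq\mathbf{U}$, $w\in\mathbb{W}(N)$, $j\in N$, and $T\subseteq N\setminus\{j\}$ such that $j$ is a null player in $w$, we have $\mathrm{MPW}_j(w^{r^\star}_{-T})=0$.
   Context: $\mathbf{U}$ is a finite set of players; cardinalities of $N,S,B$ are $n,s,b$. $\Pi(N)$ is the set of partitions of $N$ ($\Pi(\emptyset)=\{\emptyset\}$). $p^\star$ is the Ewens distribution $p^\star_N(\pi)=\frac{\prod_{B\in\pi}(b-1)!}{n!}$. $\pi_{+i\leadsto B}=(\pi\setminus\{B\})\cup\{B\cup\{i\}\}$ for $B\in\pi$, $\pi_{+i\leadsto\emptyset}=\pi\cup\{\{i\}\}$. Embedded coalitions $\mathcal{E}(N)=\{(S,\pi):S\subseteq N,\pi\in\Pi(N\setminus S)\}$; a TUX game on $N$ is $w:\mathcal{E}(N)\to\mathbb{R}$ with $w(\emptyset,\pi)=0$; $\mathbb{W}(N)$ their set. The restriction operator $r^\star$ maps $w\in\mathbb{W}(N)$, $i\in N$ to $w^{r^\star}_{-i}\in\mathbb{W}(N\setminus\{i\})$, $w^{r^\star}_{-i}(S,\pi)=\frac{1}{n-s}w(S,\pi_{+i\leadsto\emptyset})+\sum_{B\in\pi}\frac{b}{n-s}w(S,\pi_{+i\leadsto B})$ for $(S,\pi)\in\mathcal{E}(N\setminus\{i\})$; it is path independent ($(w^{r^\star}_{-i})^{r^\star}_{-k}=(w^{r^\star}_{-k})^{r^\star}_{-i}$), so $w^{r^\star}_{-T}$ (removing the players of $T$ successively, in any order) is well defined, with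 $w^{r^\star}_{-\emptyset}=w$. Player $j$ is a null player in $w$ if $w(S\cup\{j\},\pi)=w(S,\pi_{+j\leadsto B})$ for all $(S,\pi)\in\mathcal{E}(N\setminus\{j\})$, $B\in\pi\cup\{\emptyset\}$. The Shapley value of a TU game $v$ is $\mathrm{Sh}_i(v)=\sum_{S\subseteq N\setminus\{i\}}\frac{s!(n-s-1)!}{n!}(v(S\cup\{i\})-v(S))$; the MPW solution is $\mathrm{MPW}(w)=\mathrm{Sh}(\bar v^\star_w)$ with $\bar v^\star_w(S)=\sum_{\pi\in\Pi(N\setminus S)}p^\star_{N\setminus S}(\pi)w(S,\pi)$. *)

(* Defs.v *)
From mathcomp Require Import all_boot all_order all_algebra.
Set Implicit Arguments. Unset Strict Implicit. Unset Printing Implicit Defensive.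
Import Order.TTheory GRing.Theory Num.Theory.
Local Open Scope ring_scope.

Section Defs.
Variables (U : finType) (R : realFieldType).

(* A TUX game is represented as a total function on pairs (S, pi); only its
   values on embedded coalitions (S, pi) with S \subset N and
   partition pi (N :\: S) matter. *)
Definition game := {set U} -> {set {set U}} -> R.

Definition plus (P : {set {set U}}) (i : U) (B : {set U}) : {set {set U}} :=
  if B == set0 then P :|: [set [set i]]
  else (P :\ B) :|: [set B :|: [set i]].

Definition tux (N : {set U}) (w : game) : Prop :=
  forall P : {set {set U}}, partition P N -> w set0 P = 0.

Definition null_player (N : {set U}) (w : game) (j : U) : Prop :=
  forall (S : {set U}) (P : {set {set U}}) (B : {set U}),
    S \subset N :\ j -> partition P ((N :\ j) :\: S) ->
    (B \in P) || (B == set0) ->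
    w (j |: S) P = w S (plus P j B).

Definition restr (N : {set U}) (w : game) (i : U) : game :=
  fun S P =>
    ((#|N| - #|S|)%N%:R)^-1 * w S (plus P i set0)
    + \sum_(B in P) (#|B|%:R / (#|N| - #|S|)%N%:R) * w S (plus P i B).

Fixpoint restr_seq (N : {set U}) (w : game) (s : seq U) : game :=
  match s with
  | [::] => w
  | i :: s' => restr_seq (N :\ i) (restr N w i) s'
  end.

Definition pstar (N : {set U}) (P : {set {set U}}) : R :=
  (\prod_(B in P) (#|B|.-1)`!)%N%:R / (#|N|`!)%:R.

Definition vbar (N : {set U}) (w : game) (S : {set U}) : R :=
  \sum_(P : {set {set U}} | partition P (N :\: S)) pstar (N :\: S) P * w S P.

Definition shapley (N : {set U}) (v : {set U} -> R) (i : U) : R :=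
  \sum_(S : {set U} | S \subset N :\ i)
     ((#|S|`! * (#|N| - #|S| - 1)`!)%N%:R / (#|N|`!)%:R) * (v (i |: S) - v S).

Definition MPW (N : {set U}) (w : game) (i : U) : R := shapley N (vbar N w) i.

End Defs.

(* Main.v *)
Require Import Defs.
From mathcomp Require Import all_boot all_order all_algebra.
From mathcomp Require Import ring.
Import GRing.Theory Num.Theory.
Set Implicit Arguments. Unset Strict Implicit. Unset Printing Implicit Defensive.
Local Open Scope ring_scope.

Section Comb.
Variable U : finType.
Implicit Types (X A B C : {set U}) (P Q : {set {set U}}) (i : U).

Lemma notin_block X P i C : i \notin X -> partition P X -> C \in P -> i \notin C.
Proof.
move=> iX pP CP; apply: contra iX => iC.
by have /subsetP := partitionS pP CP; apply.
Qed.

Lemma part_plus X P i B : i \notin X -> partition P X -> B \in set0 |: P ->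
  partition (plus P i B) (i |: X).
Proof.
move=> iX pP; rewrite /plus; case: eqP => [-> _| /eqP B0 /setU1P [/eqP|BP]].
- rewrite setUC; apply: partitionU1 => //; last by rewrite disjoints1.
  by apply/set0Pn; exists i; rewrite inE.
- by rewrite (negbTE B0).
have /subsetP sBX := partitionS pP BP.
have iB := notin_block iX pP BP.
have -> : i |: X = (B :|: [set i]) :|: (X :\: B).
  apply/setP => x; rewrite !inE; case xB: (x \in B); last by rewrite /= ?orbF ?andbT orbC.
  idtac.
  by rewrite /= (sBX _ xB) !orbT.
rewrite setUC; apply: partitionU1; first exact: partitionD1.
  by apply/set0Pn; exists i; rewrite !inE ?eqxx ?orbT.
rewrite -setI_eq0; apply/eqP/setP => x; rewrite !inE.
case: (x =P i) => [->|]; first by rewrite (negbTE iX) !andbF.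
by rewrite orbF; case: (x \in B).
Qed.

Definition dec i Q : {set {set U}} * {set U} :=
  let A := pblock Q i in let B := A :\ i in
  (if B == set0 then Q :\ A else B |: (Q :\ A), B).

Lemma dec_plus X P i B : i \notin X -> partition P X -> B \in set0 |: P ->
  dec i (plus P i B) = (P, B).
Proof.
move=> iX pP hB; have pQ := part_plus iX pP hB.
have tQ := partition_trivIset pQ.
move: pQ tQ; case/setU1P: hB => [->|BP] pQ tQ; rewrite /plus /dec in pQ tQ *.
- rewrite eqxx in pQ tQ *.
  have iP : [set i] \notin P.
    by apply/negP => /(notin_block iX pP); rewrite inE eqxx.
  rewrite (@def_pblock _ _ [set i]) //; try by rewrite !inE ?eqxx ?orbT.
  rewrite setDv eqxx; congr pair; apply/setP => C; rewrite !inE.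
  by case: (C =P [set i]) => [->|]; rewrite ?(negbTE iP) ?orbF.
have B0 := partition_neq0 pP BP; rewrite (negbTE B0) in pQ tQ *.
have iB := notin_block iX pP BP.
rewrite (@def_pblock _ _ (B :|: [set i])) //; try by rewrite !inE ?eqxx ?orbT.
rewrite setUC setU1K // (negbTE B0); congr pair.
have -> : (P :\ B :|: [set i |: B]) :\ (i |: B) = P :\ B.
  apply/setP => C; rewrite !inE; case: (C =P i |: B) => [->|] //=.
  have : i |: B \notin P by apply/negP => /(notin_block iX pP); rewrite !inE eqxx.
  by move/negbTE->; rewrite andbF.
  by rewrite orbF.
exact: setD1K.
Qed.

Lemma plus_dec_all X Q i : i \notin X -> partition Q (i |: X) ->
  [/\ plus (dec i Q).1 i (dec i Q).2 = Q, partition (dec i Q).1 X &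
      (dec i Q).2 \in set0 |: (dec i Q).1].
Proof.
move=> iX pQ; have tQ := partition_trivIset pQ.
have iQ : i \in cover Q by rewrite (cover_partition pQ) setU11.
set A := pblock Q i.
have AQ : A \in Q by apply: pblock_mem.
have iA : i \in A by rewrite mem_pblock.
have /subsetP sA := partitionS pQ AQ.
have pP' := partitionD1 pQ AQ.
rewrite /dec -/A /=.
case: eqP => [B0|/eqP B0].
- have A1 : A = [set i].
    apply/setP => x; rewrite inE; apply/idP/eqP => [xA|->//].
    apply/eqP; apply: contraT => xi; have : x \in A :\ i by rewrite !inE xi.
    by rewrite B0 inE.
  rewrite A1 in pP' *.
  have eX : (i |: X) :\: [set i] = X.
    apply/setP => x; rewrite !inE; case: (x =P i) => [->|] //=.
    by rewrite (negbTE iX).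
  rewrite eX in pP'.
  rewrite setDv; split => //; last by rewrite setU11.
  by rewrite /plus eqxx setUC setD1K // -A1.
set B := A :\ i.
have sBA : B \subset A by apply: subsetDl.
have BP' : B \notin Q :\ A.
  apply/negP => /setD1P [BA BQ].
  have /trivIsetP tQ' := tQ.
  have dBA := tQ' _ _ BQ AQ BA.
  case/set0Pn: B0 => x xB.
  by have := disjointFr dBA xB; rewrite (subsetP sBA _ xB).
split; last by rewrite !inE ?eqxx ?orbT.
- rewrite /plus (negbTE B0).
  have -> : B :|: [set i] = A.
    apply/setP => x; rewrite !inE; case: (x =P i) => [->|] //=; by rewrite ?iA ?orbF.
  rewrite setU1K //; rewrite setUC; exact: setD1K.
have -> : X = B :|: ((i |: X) :\: A).
  apply/setP => x; rewrite !inE; apply/idP/idP.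
  - move=> xX; have xi : x != i by apply: contraNneq iX => <-.
    by case: (x \in A); rewrite xi xX ?orbT.
  case/orP => [/andP[xi /sA]|/andP[xA]]; first by rewrite !inE (negbTE xi).
  by move=> /orP[/eqP xi|//]; rewrite xi iA in xA.
apply: partitionU1 => //.
rewrite -setI_eq0; apply/eqP/setP => x; rewrite !inE.
by case: (x \in A); rewrite ?andbF.
Qed.

End Comb.
Section Sums.
Variables (U : finType) (R : realFieldType).
Implicit Types (X A B C : {set U}) (P Q : {set {set U}}) (i : U).

Lemma sum_plus X i (F : {set {set U}} -> R) : i \notin X ->
  \sum_(P | partition P X) \sum_(B in set0 |: P) F (plus P i B) =
  \sum_(Q | partition Q (i |: X)) F Q.
Proof.
move=> iX; rewrite pair_big_dep /=.
rewrite (reindex_onto (fun p => plus p.1 i p.2) (dec i)) /=; last first.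
  by move=> Q pQ; case: (plus_dec_all iX pQ) => ->.
apply: eq_bigl => -[P B] /=.
apply/idP/andP => [/andP[pP hB]|[pQ /eqP e]].
  by split; [apply: part_plus | rewrite (dec_plus iX pP hB)].
by case: (plus_dec_all iX pQ); rewrite e => _ -> ->.
Qed.

Lemma natr_neq0 n : (n.+1%:R : R) != 0.
Proof. by rewrite pnatr_eq0. Qed.

Lemma fact_neq0 n : ((n`!)%:R : R) != 0.
Proof. by rewrite pnatr_eq0 -lt0n fact_gt0. Qed.

Lemma pstar_plus X P i B : i \notin X -> partition P X -> B \in set0 |: P ->
  pstar R (i |: X) (plus P i B) =
  pstar R X P * ((if B == set0 then 1%N else #|B|)%:R / (#|X|.+1)%:R).
Proof.
move=> iX pP hB; rewrite /pstar cardsU1 iX add1n factS natrM.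
have F1 := natr_neq0 #|X|; have F2 := fact_neq0 #|X|.
have [->|BP] : B = set0 \/ B \in P by apply/setU1P.
  rewrite /plus eqxx.
  have iP : [set i] \notin P.
    by apply/negP => /(notin_block iX pP); rewrite inE eqxx.
  rewrite setUC big_setU1 //= cards1 mul1n; field. by rewrite addrC natr1 F1 F2.
have B0 := partition_neq0 pP BP; have iB := notin_block iX pP BP.
rewrite /plus (negbTE B0).
have -> : P :\ B :|: [set B :|: [set i]] = (i |: B) |: (P :\ B) by rewrite setUC [B :|: _]setUC.
rewrite big_setU1 /=; last first.
  by apply/negP => /setD1P [_ /(notin_block iX pP)]; rewrite !inE eqxx.
rewrite [in RHS](big_setD1 B BP) /= cardsU1 iB add1n /=.
have cB : (#|B|.-1).+1 = #|B| by rewrite prednK // card_gt0.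
rewrite -{1}cB factS cB.
rewrite !natrM; field. by rewrite addrC natr1 F1 F2.
Qed.

End Sums.
Section Main.
Variables (U : finType) (R : realFieldType).
Implicit Types (X A B C S N : {set U}) (P Q : {set {set U}}) (i : U) (w : game U R).

Lemma ewens_sum X i (g : {set {set U}} -> R) : i \notin X ->
  \sum_(Q | partition Q (i |: X)) pstar R (i |: X) Q * g Q =
  \sum_(P | partition P X) pstar R X P *
    (((#|X|.+1)%:R)^-1 * g (plus P i set0)
     + \sum_(B in P) (#|B|%:R / (#|X|.+1)%:R) * g (plus P i B)).
Proof.
move=> iX; rewrite -(@sum_plus U R X i (fun Q => pstar R (i |: X) Q * g Q) iX).
apply: eq_bigr => P pP.
rewrite big_setU1 /=; last by rewrite (partition0 pP).
rewrite mulrDr mulr_sumr; congr (_ + _).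
  by rewrite (pstar_plus R iX pP) ?setU11 // eqxx div1r mulrA.
apply: eq_bigr => B BP.
rewrite (pstar_plus R iX pP); last by rewrite !inE BP orbT.
by rewrite (negbTE (partition_neq0 pP BP)) -mulrA.
Qed.

Lemma vbar_restr N w i S : i \in N -> S \subset N :\ i ->
  vbar (N :\ i) (restr N w i) S = vbar N w S.
Proof.
move=> iN sS; set X := (N :\ i) :\: S.
have iX : i \notin X by rewrite !inE eqxx andbF.
have iS : i \notin S by apply/negP => /(subsetP sS); rewrite !inE eqxx.
have eNS : N :\: S = i |: X.
  apply/setP => x; rewrite !inE; case: (x =P i) => [->|] /=; by rewrite ?iN ?iS.
have cX : (#|N| - #|S|)%N = #|X|.+1.
  have sSN : S \subset N by apply: subset_trans sS (subsetDl _ _).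
  by have := cardsU1 i X; rewrite iX add1n -eNS cardsD (setIidPr sSN).
rewrite /vbar eNS ewens_sum //; apply: eq_bigr => P pP; congr (_ * _).
by rewrite /restr cX.
Qed.

Lemma vbar_null N w j S : null_player N w j -> j \in N -> S \subset N :\ j ->
  vbar N w (j |: S) = vbar N w S.
Proof.
move=> nj jN sS; set X := (N :\ j) :\: S.
have jX : j \notin X by rewrite !inE eqxx andbF.
have jS : j \notin S by apply/negP => /(subsetP sS); rewrite !inE eqxx.
have eNS : N :\: S = j |: X.
  apply/setP => x; rewrite !inE; case: (x =P j) => [->|] /=; by rewrite ?jN ?jS.
have eNjS : N :\: (j |: S) = X by rewrite -setDDl.
rewrite /vbar eNS eNjS ewens_sum //; apply: eq_bigr => P pP; congr (_ * _).
rewrite -(nj S P set0 sS pP) ?eqxx ?orbT //.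
rewrite (eq_bigr (fun B => #|B|%:R / (#|X|.+1)%:R * w (j |: S) P)); last first.
  by move=> B BP; rewrite -(nj S P B sS pP) ?BP.
rewrite -mulr_suml -mulr_suml -natr_sum -(card_partition pP) -mulrDl.
have F1 := natr_neq0 R #|X|.
rewrite [_ + _](_ : _ = 1) ?mul1r //; field.
by rewrite addrC natr1 F1.
Qed.

Lemma vbar_seq s N w S : uniq s -> {subset s <= N} ->
  S \subset N :\: [set x in s] ->
  vbar (N :\: [set x in s]) (restr_seq N w s) S = vbar N w S.
Proof.
elim: s N w => [|i s IH] N w /=.
  have -> : [set x in [::]] = set0 :> {set U} by apply/setP => x; rewrite !inE.
  by rewrite setD0.
case/andP => nis us sN.
have -> : [set x in i :: s] = i |: [set x in s] by apply/setP => x; rewrite !inE.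
rewrite -setDDl => sS.
rewrite IH //.
- apply: vbar_restr; first by apply: sN; rewrite inE eqxx.
  by apply: subset_trans sS (subsetDl _ _).
move=> x xs; rewrite !inE (sN x) ?inE ?xs ?orbT // andbT.
by apply: contraNneq nis => <-.
Qed.

End Main.
Unset Implicit Arguments.

Theorem proposition4 (U : finType) (R : realFieldType) (N : {set U})
    (w : game U R) (j : U) (T : {set U}) (s : seq U) :
  tux N w -> j \in N -> T \subset N :\ j ->
  uniq s -> [set x in s] = T ->
  null_player N w j ->
  MPW (N :\: T) (restr_seq N w s) j = 0.
Proof.
move=> _ jN sT us eT nj; rewrite -eT in sT *.
have sN : {subset s <= N}.
  by move=> x xs; have := subsetP sT x; rewrite !inE xs => /(_ isT) /andP[].
have jT : j \notin [set x in s].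
  by apply/negP => /(subsetP sT); rewrite !inE eqxx.
rewrite /MPW /shapley; apply: big1 => S sS.
have sS1 : S \subset N :\: [set x in s].
  by apply: subset_trans sS (subsetDl _ _).
have sS2 : j |: S \subset N :\: [set x in s].
  by rewrite subUset sub1set sS1 andbT !inE jN andbT; move: jT; rewrite inE.
have sS3 : S \subset N :\ j.
  apply/subsetP => x /(subsetP sS); rewrite !inE => /andP[-> /andP[_ ->]].
  by [].
by rewrite !vbar_seq // vbar_null // subrr mulr0.
Qed.
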